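(* Let $a,b,\alpha,\beta$ be complex numbers with $2a-b\neq 0$ and $\beta a-\alpha b\neq 0$, let $n\ge1$ be an integer, and let $s$ be a square root of $\frac{b+2a}{b-2a}$. Then \[ \Psi\left(\begin{array}{cc|c} a & b & n \\ \alpha & \beta & 0 \end{array}\right)=\Psi(a,b,n)=\frac{(2a-b)^{\lfloor n/2\rfloor}}{2^n}\Big\{(1+s)^n+(1-s)^n\Big\}, \] and, if moreover $b+2a\neq 0$, \[ \Phi\left(\begin{array}{cc|c} a & b & n \\ \alpha & \beta & 0 \end{array}\right)=\Phi(a,b,n)=\frac{(2a-b)^{\lfloor (n-1)/2\rfloor}}{2^n s}\Big\{(1+s)^n-(1-s)^n\Big\}. \]
   Context: $\delta(m)=1$ for $m$ odd, $\delta(m)=0$ for $m$ even; $\lfloor\cdot\rfloor$ is the floor. For $a,b$, the sequences $\Psi(a,b,n)$, $\Phi(a,b,n)$ ($n\ge0$) are defined by $\Psi(a,b,0)=2$, $\Psi(a,b,1)=1$, $\Psi(a,b,n+1)=(2a-b)^{\delta(n)}\Psi(a,b,n)-a\Psi(a,b,n-1)$, and $\Phi(a,b,0)=0$, $\Phi(a,b,1)=1$, $\Phi(a,b,n+1)=(2a-b)^{\delta(n+1)}\Phi(a,b,n)-a\Phi(a,b,n-1)$ for $n\ge1$. For indeterminates $a,b,\alpha,\beta$ and $n\ge1$, $\Psi\left(\begin{array}{cc|c} a & b & n \\ \alpha & \beta & r \end{array}\right)$ ($0\le r\le\lfloor n/2\rfloor$) and $\Phi\left(\begin{array}{cc|c}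 a & b & n \\ \alpha & \beta & r \end{array}\right)$ ($0\le r\le\lfloor (n-1)/2\rfloor$) denote the unique polynomials in $\mathbb{Z}[a,b,\alpha,\beta]$ such that, identically in $x,y$, $(\beta a-\alpha b)^{\lfloor n/2\rfloor}\frac{x^n+y^n}{(x+y)^{\delta(n)}}=\sum_{r}\Psi\left(\begin{array}{cc|c} a & b & n \\ \alpha & \beta & r \end{array}\right)(\alpha x^2+\beta xy+\alpha y^2)^{\lfloor n/2\rfloor-r}(ax^2+bxy+ay^2)^r$ and $(\beta a-\alpha b)^{\lfloor (n-1)/2\rfloor}\frac{x^n-y^n}{(x-y)(x+y)^{\delta(n-1)}}=\sum_{r}\Phi\left(\begin{array}{cc|c} a & b & n \\ \alpha & \beta & r \end{array}\right)(\alpha x^2+\beta xy+\alpha y^2)^{\lfloor (n-1)/2\rfloor-r}(ax^2+bxy+ay^2)^r$ (uniqueness holds since the two quadratic forms are algebraically independent when $\beta a-\alpha b\ne0$). For numerical $a,b,\alpha,\beta$ these polynomials are evaluated. *)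

(* Defs.v *)
(* Complex numbers are rendered as an arbitrary
   numClosedFieldType C (the complex numbers are one such field). *)
From HB Require Import structures.
From mathcomp Require Import all_boot all_order all_algebra.
From Stdlib Require Import ClassicalEpsilon.
Set Implicit Arguments. Unset Strict Implicit. Unset Printing Implicit Defensive.
Import Order.TTheory GRing.Theory Num.Theory.
Local Open Scope ring_scope.

Section Defs.
Variable C : numClosedFieldType.

(* delta(m) = odd m ; floor(n/2) = n./2 *)

(* psi_pair a b n = (Psi(a,b,n), Psi(a,b,n+1)) *)
Fixpoint psi_pair (a b : C) (n : nat) : C * C :=
  match n with
  | 0%N => (2, 1)
  | m.+1 => let: (p, q) := psi_pair a b m in
            (q, (2 * a - b) ^+ (odd m.+1) * q - a * p)
  end.
Definition Psi (a b : C) (n : nat) : C := (psi_pair a b n).1.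

(* phi_pair a b n = (Phi(a,b,n), Phi(a,b,n+1)) *)
Fixpoint phi_pair (a b : C) (n : nat) : C * C :=
  match n with
  | 0%N => (0, 1)
  | m.+1 => let: (p, q) := phi_pair a b m in
            (q, (2 * a - b) ^+ (odd m.+2) * q - a * p)
  end.
Definition Phi (a b : C) (n : nat) : C := (phi_pair a b n).1.

Definition qform (u v x y : C) : C := u * x ^+ 2 + v * x * y + u * y ^+ 2.

(* c is a family of coefficients such that, identically in x, y,
   (beta a - alpha b)^(n/2) (x^n+y^n)/(x+y)^delta(n)
     = sum_r c_r (alpha x^2+beta xy+alpha y^2)^(n/2-r) (a x^2+bxy+ay^2)^r
   (the division is cleared, which is equivalent for polynomial identities). *)
Definition is_Psi_coefs (a b al be : C) (n : nat) (c : nat -> C) : Prop :=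
  forall x y : C,
    (be * a - al * b) ^+ (n./2) * (x ^+ n + y ^+ n) =
    (x + y) ^+ (odd n) *
      \sum_(r < (n./2).+1) c r * qform al be x y ^+ (n./2 - r) * qform a b x y ^+ r.

Definition is_Phi_coefs (a b al be : C) (n : nat) (c : nat -> C) : Prop :=
  forall x y : C,
    (be * a - al * b) ^+ ((n.-1)./2) * (x ^+ n - y ^+ n) =
    (x - y) * (x + y) ^+ (odd n.-1) *
      \sum_(r < ((n.-1)./2).+1)
          c r * qform al be x y ^+ ((n.-1)./2 - r) * qform a b x y ^+ r.

(* The (evaluated) coefficient polynomials: a chosen coefficient family
   satisfying the identity (unique when beta a - alpha b <> 0). *)
Definition Psi_coef (a b al be : C) (n r : nat) : C :=
  epsilon (inhabits (fun _ : nat => (0 : C))) (is_Psi_coefs a b al be n) r.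
Definition Phi_coef (a b al be : C) (n r : nat) : C :=
  epsilon (inhabits (fun _ : nat => (0 : C))) (is_Phi_coefs a b al be n) r.

End Defs.

(* Main.v *)
Require Import Defs.
From HB Require Import structures.
From mathcomp Require Import all_boot all_order all_algebra.
From mathcomp Require Import ring.
From Stdlib Require Import ClassicalEpsilon.
Import Order.TTheory GRing.Theory Num.Theory.
Local Open Scope ring_scope.
Set Implicit Arguments. Unset Strict Implicit.

Section S.
Variable C : numClosedFieldType.

Definition form (c : nat -> C) (m : nat) (P Q : C) :=
  \sum_(r < m.+1) c r * P ^+ (m - r) * Q ^+ r.

Lemma form_lin c m p q : exists c', forall P Q,
  (p * P + q * Q) * form c m P Q = form c' m.+1 P Q.
Proof.
exists (fun r => p * (if (r <= m)%N then c r else 0) + q * (if r is r'.+1 then c r' else 0)).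
move=> P Q; rewrite /form.
rewrite mulrDl !mulr_sumr.
under [RHS]eq_bigr do rewrite !mulrDl.
rewrite big_split /=.
rewrite [X in _ = X + _]big_ord_recr [X in _ = _ + X]big_ord_recl /= ltnn mulr0 !mul0r addr0 mulr0 !mul0r add0r.
congr (_ + _); apply: eq_bigr => i _.
  by rewrite /= -ltnS ltn_ord subSn ?exprS; [ring | rewrite -ltnS ltn_ord].
by rewrite /bump /= add1n subSS exprS; ring.
Qed.

Lemma form_sub c d m P Q : form c m P Q - form d m P Q = form (fun r => c r - d r) m P Q.
Proof. by rewrite /form -sumrB; apply: eq_bigr => i _; ring. Qed.

Lemma form_Q0 c m P : form c m P 0 = c 0%N * P ^+ m.
Proof.
rewrite /form big_ord_recl big1 ?addr0 ?expr0 ?mulr1 ?subn0 // => i _.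
by rewrite expr0n /= mulr0.
Qed.

Variables a b al be : C.
Local Notation D := (be * a - al * b).

Lemma DuE x y : D * (x ^+ 2 + y ^+ 2) = be * qform a b x y - b * qform al be x y.
Proof. rewrite /qform; ring. Qed.
Lemma DvE x y : D * (x * y) = a * qform al be x y - al * qform a b x y.
Proof. rewrite /qform; ring. Qed.

Lemma gen (g : nat -> C -> C -> C) (L : C -> C -> C) (t : nat) :
 (forall k x y, g k.+4 x y = (x ^+ 2 + y ^+ 2) * g k.+2 x y - (x * y) ^+ 2 * g k x y) ->
 (exists c, forall x y, g t x y = L x y * form c 0 (qform al be x y) (qform a b x y)) ->
 (exists c, forall x y, D * g t.+2 x y = L x y * form c 1 (qform al be x y) (qform a b x y)) ->
 forall m, exists c, forall x y,
   D ^+ m * g (m.*2 + t)%N x y = L x y * form c m (qform al be x y) (qform a b x y).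
Proof.
move=> rec [c0 H0] [c1 H1].
suff H : forall m,
  (exists c, forall x y, D ^+ m * g (m.*2 + t)%N x y = L x y * form c m (qform al be x y) (qform a b x y)) /\
  (exists c, forall x y, D ^+ m.+1 * g (m.+1.*2 + t)%N x y = L x y * form c m.+1 (qform al be x y) (qform a b x y)).
  by move=> m; case: (H m).
elim=> [|m [[d0 E0] [d1 E1]]].
  split.
    by exists c0 => x y; rewrite expr0 mul1r add0n.
  by exists c1 => x y; rewrite expr1 add2n.
split; first by exists d1.
have [e1 He1] := form_lin d1 m.+1 (- b) be.
have [e2 He2] := form_lin d0 m a (- al).
have [e3 He3] := form_lin e2 m.+1 a (- al).
exists (fun r => e1 r - e3 r) => x y.
have -> : (m.+2.*2 + t = (m.*2 + t).+4)%N by rewrite !doubleS !addSn.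
have E1' : (m.+1.*2 + t = (m.*2 + t).+2)%N by rewrite !doubleS !addSn.
rewrite E1' in E1.
rewrite rec -form_sub -He1 -He3 -He2.
have -> : D ^+ m.+2 * ((x ^+ 2 + y ^+ 2) * g (m.*2 + t).+2%N x y - (x * y) ^+ 2 * g (m.*2 + t)%N x y)
  = (D * (x ^+ 2 + y ^+ 2)) * (D ^+ m.+1 * g (m.*2 + t).+2%N x y)
    - (D * (x * y)) ^+ 2 * (D ^+ m * g (m.*2 + t)%N x y) by rewrite !exprS; ring.
rewrite E1 E0 DuE DvE; ring.
Qed.

Lemma form1 c P Q : form c 1 P Q = c 0%N * P + c 1%N * Q.
Proof. by rewrite /form !big_ord_recr big_ord0 /=; rewrite add0r subn0 subnn; ring. Qed.
Lemma form0 c P Q : form c 0 P Q = c 0%N.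
Proof. by rewrite /form big_ord1 /= mulr1 mulr1. Qed.

Lemma psi_exists n : exists c, is_Psi_coefs a b al be n c.
Proof.
have := @gen (fun k x y => x ^+ k + y ^+ k) (fun x y => (x + y) ^+ (odd n)) (odd n).
move=> G; have [] := G _ _ _ (n./2).
- by move=> k x y; rewrite !exprS; ring.
- case: (odd n).
    by exists (fun _ => 1) => x y; rewrite form0 /=; ring.
  by exists (fun _ => 2) => x y; rewrite form0 /=; ring.
- case: (odd n).
    exists (fun r => if r is 0%N then - (a + b) else be + al) => x y; rewrite form1 /qform; ring.
  exists (fun r => if r is 0%N then - b else be) => x y; rewrite form1 /qform; ring.
move=> c Hc; exists c => x y; move: (Hc x y).
by rewrite addnC odd_double_half.
Qed.

Lemma phi_exists n : (0 < n)%N -> exists c, is_Phi_coefs a b al be n c.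
Proof.
case: n => // n _.
have := @gen (fun k x y => x ^+ k - y ^+ k) (fun x y => (x - y) * (x + y) ^+ (odd n)) (odd n).+1.
move=> G; have [] := G _ _ _ (n./2).
- by move=> k x y; rewrite !exprS; ring.
- case: (odd n).
    by exists (fun _ => 1) => x y; rewrite form0 /=; ring.
  by exists (fun _ => 1) => x y; rewrite form0 /=; ring.
- case: (odd n).
    exists (fun r => if r is 0%N then - b else be) => x y; rewrite form1 /qform; ring.
  exists (fun r => if r is 0%N then a - b else be - al) => x y; rewrite form1 /qform; ring.
move=> c Hc; exists c => x y; move: (Hc x y).
by rewrite addnS addnC odd_double_half /=.
Qed.
End S.
Section T.
Variable C : numClosedFieldType.

Lemma two_neq0 : (2 : C) != 0. Proof. by rewrite pnatr_eq0. Qed.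

Lemma psi_closed (a b s : C) : (2 * a - b) * (1 - s ^+ 2) = 4 * a -> forall k,
  psi_pair a b k.*2 = ((2 * a - b) ^+ k / 2 ^+ k.*2 * ((1 + s) ^+ k.*2 + (1 - s) ^+ k.*2),
                       (2 * a - b) ^+ k / 2 ^+ k.*2.+1 * ((1 + s) ^+ k.*2.+1 + (1 - s) ^+ k.*2.+1)) /\
  psi_pair a b k.*2.+1 = ((2 * a - b) ^+ k / 2 ^+ k.*2.+1 * ((1 + s) ^+ k.*2.+1 + (1 - s) ^+ k.*2.+1),
                       (2 * a - b) ^+ k.+1 / 2 ^+ k.*2.+2 * ((1 + s) ^+ k.*2.+2 + (1 - s) ^+ k.*2.+2)).
Proof.
move=> h; have h2 := two_neq0.
have ha : a = (2 * a - b) * (1 - s ^+ 2) / 4.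
  rewrite h mulrC mulKf //; by rewrite pnatr_eq0.
elim=> [|k [P1 P2]].
  split; first by rewrite /= !expr0 !expr1 divr1 mul1r; congr (_, _); field.
  rewrite /= !expr0 !expr1 mul1r; congr (_, _); first by field.
  by move: (2 * a - b) ha => w ->; field.
rewrite doubleS /= P1 /= odd_double /=.
split; congr (_, _);
  move: (2 * a - b) ha => w ->; rewrite !exprS; field;
  by rewrite ?expf_neq0 ?pnatr_eq0.
Qed.

Lemma phiS (a b : C) n : phi_pair a b n.+1 =
  let: (p, q) := phi_pair a b n in (q, (2 * a - b) ^+ (odd n.+2) * q - a * p).
Proof. by []. Qed.

Lemma phi_closed (a b s : C) : s != 0 -> (2 * a - b) * (1 - s ^+ 2) = 4 * a -> forall k,
  phi_pair a b k.*2.+1 = ((2 * a - b) ^+ k / (2 ^+ k.*2.+1 * s) * ((1 + s) ^+ k.*2.+1 - (1 - s) ^+ k.*2.+1),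
                       (2 * a - b) ^+ k / (2 ^+ k.*2.+2 * s) * ((1 + s) ^+ k.*2.+2 - (1 - s) ^+ k.*2.+2)) /\
  phi_pair a b k.*2.+2 = ((2 * a - b) ^+ k / (2 ^+ k.*2.+2 * s) * ((1 + s) ^+ k.*2.+2 - (1 - s) ^+ k.*2.+2),
                       (2 * a - b) ^+ k.+1 / (2 ^+ k.*2.+3 * s) * ((1 + s) ^+ k.*2.+3 - (1 - s) ^+ k.*2.+3)).
Proof.
move=> hs h; have h2 := two_neq0.
have ha : a = (2 * a - b) * (1 - s ^+ 2) / 4.
  rewrite h mulrC mulKf //; by rewrite pnatr_eq0.
elim=> [|k [P1 P2]].
  rewrite /=.
  split; congr (_, _); try (by field);
  by move: (2 * a - b) ha => w ->; field.
rewrite doubleS (phiS _ _ k.*2.+3) (phiS _ _ k.*2.+2) (phiS _ _ k.*2.+1) P1 /= odd_double /=.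
split; congr (_, _);
  move: (2 * a - b) ha => w ->; rewrite !exprS; field;
  by rewrite ?hs ?expf_neq0 ?pnatr_eq0.
Qed.
End T.

Lemma sum_Q0 (C : numClosedFieldType) (c : nat -> C) m P :
  \sum_(r < m.+1) c r * P ^+ (m - r) * 0 ^+ r = c 0%N * P ^+ m.
Proof. exact: form_Q0. Qed.

Lemma solve_c0 (C : numClosedFieldType) (w D Q1 A c0 L : C) k :
  D != 0 -> w * Q1 = 4 * D -> D ^+ k * A = L * (c0 * Q1 ^+ k) ->
  c0 * (L * 4 ^+ k) = w ^+ k * A.
Proof.
move=> hD hQ E; apply: (mulfI (expf_neq0 k hD)).
rewrite [RHS]mulrCA E.
rewrite [LHS](_ : _ = c0 * L * (4 * D) ^+ k); first by rewrite -hQ exprMn; ring.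
rewrite exprMn; ring.
Qed.

Lemma four_pow (C : numClosedFieldType) (t k : nat) : (2 : C) ^+ t * 4 ^+ k = 2 ^+ (t + k.*2).
Proof.
by rewrite exprD -muln2 mulnC exprM; congr (_ * (_ ^+ _)); rewrite expr2 -natrM.
Qed.

Theorem theorem5p1 (C : numClosedFieldType) (a b al be : C) (n : nat) (s : C) :
  2 * a - b != 0 -> be * a - al * b != 0 -> (0 < n)%N ->
  s ^+ 2 = (b + 2 * a) / (b - 2 * a) ->
  (Psi_coef a b al be n 0 = Psi a b n /\
   Psi a b n = (2 * a - b) ^+ (n./2) / 2 ^+ n * ((1 + s) ^+ n + (1 - s) ^+ n)) /\
  (b + 2 * a != 0 ->
   Phi_coef a b al be n 0 = Phi a b n /\
   Phi a b n = (2 * a - b) ^+ ((n.-1)./2) / (2 ^+ n * s) * ((1 + s) ^+ n - (1 - s) ^+ n)).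
Proof.
move=> hw hD hn hs.
have h2 : (2:C) != 0 := two_neq0 _.
have h2n : forall j, (2 : C) ^+ j != 0 by move=> j; rewrite expf_neq0.
have hbw : b - 2 * a != 0 by rewrite -opprB oppr_eq0.
have hS : s ^+ 2 * (b - 2 * a) = b + 2 * a by rewrite hs divfK.
have h4a : (2 * a - b) * (1 - s ^+ 2) = 4 * a.
  have -> : (2 * a - b) * (1 - s ^+ 2) = (2 * a - b) + s ^+ 2 * (b - 2 * a) by ring.
  rewrite hS; ring.
have hQ2 : qform a b (1 + s) (1 - s) = 0.
  have -> : qform a b (1 + s) (1 - s) = (2 * a + b) - s ^+ 2 * (b - 2 * a) by rewrite /qform; ring.
  rewrite hS; ring.
have hQ1 : (2 * a - b) * qform al be (1 + s) (1 - s) = 4 * (be * a - al * b).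
  have -> : (2 * a - b) * qform al be (1 + s) (1 - s) =
     2 * al * ((2 * a - b) - s ^+ 2 * (b - 2 * a)) + be * ((2 * a - b) + s ^+ 2 * (b - 2 * a))
     by rewrite /qform; ring.
  rewrite hS; ring.
split.
  have [k [t En]] : exists k (t : bool), n = (t + k.*2)%N
    by exists n./2, (odd n); rewrite odd_double_half.
  clear hn; subst n; rewrite half_bit_double.
  have PC : Psi a b (t + k.*2) = (2 * a - b) ^+ k / 2 ^+ (t + k.*2) *
           ((1 + s) ^+ (t + k.*2) + (1 - s) ^+ (t + k.*2)).
    have [P1 P2] := psi_closed h4a k.
    by rewrite /Psi; case: t => /=; rewrite ?add1n ?add0n ?P1 ?P2.
  have Hc := epsilon_spec (inhabits (fun _ : nat => (0 : C))) (is_Psi_coefs a b al be (t + k.*2))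
                          (psi_exists a b al be (t + k.*2)).
  rewrite /Psi_coef; set c := epsilon _ _ in Hc *.
  rewrite PC; split => //.
  move: (Hc (1 + s) (1 - s)); rewrite hQ2 sum_Q0 half_bit_double oddD odd_double oddb addbF.
  rewrite (_ : 1 + s + (1 - s) = 2); last by ring.
  move=> /(solve_c0 hD hQ1); rewrite four_pow => E.
  rewrite -[c 0%N](mulfK (h2n (t + k.*2)%N)) E; field; exact: h2n.
move=> hb2.
have hs0 : s != 0.
  by apply: contraNneq hb2 => s0; rewrite -hS s0 expr0n mul0r.
have Hc := epsilon_spec (inhabits (fun _ : nat => (0 : C))) (is_Phi_coefs a b al be n)
                        (phi_exists a b al be hn).
move: Hc; rewrite /Phi_coef.
have [k [t En]] : exists k (t : bool), n = (t + k.*2).+1%N.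
  by exists n.-1./2, (odd n.-1); rewrite odd_double_half prednK.
clear hn; subst n; rewrite /= half_bit_double.
have PC : Phi a b (t + k.*2).+1 = (2 * a - b) ^+ k / (2 ^+ (t + k.*2).+1 * s) *
           ((1 + s) ^+ (t + k.*2).+1 - (1 - s) ^+ (t + k.*2).+1).
  have [P1 P2] := phi_closed hs0 h4a k.
  by rewrite /Phi; case: t; rewrite ?add1n ?add0n ?P1 ?P2.
set c := epsilon _ _ => Hc.
rewrite PC; split => //.
move: (Hc (1 + s) (1 - s)); rewrite hQ2 sum_Q0 /= half_bit_double oddD odd_double oddb addbF.
rewrite (_ : 1 + s + (1 - s) = 2); last by ring.
rewrite (_ : 1 + s - (1 - s) = 2 * s); last by ring.
move=> H.
have H' : (be * a - al * b) ^+ k * ((1 + s) ^+ (t + k.*2).+1 - (1 - s) ^+ (t + k.*2).+1)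
   = (2 * s * 2 ^+ t) * (c 0%N * qform al be (1 + s) (1 - s) ^+ k) by rewrite H; ring.
have E := solve_c0 hD hQ1 H'.
have E' : c 0%N * (2 ^+ (t + k.*2).+1 * s) = (2 * a - b) ^+ k * ((1 + s) ^+ (t + k.*2).+1 - (1 - s) ^+ (t + k.*2).+1).
  by rewrite -E exprS -four_pow; ring.
rewrite -[c 0%N](mulfK (mulf_neq0 (h2n (t + k.*2).+1%N) hs0)) E'; field.
by rewrite hs0 h2n.
Qed.
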